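(* Let $q$ be a prime power, $m>3$, $n=q^{2m}-1$, and define $Z_{des}=\{(x,y):1\le x,y\le n,\ xy<q^{2m}-1-q^{m-1}\}$ and, for integers $0\le k\le (2m-1)/2$, $Z_{des,k}=\{(x,y)\in Z_{des}: q^k-1<x\le q^{k+1}-1\}$. For odd $l\in\{1,3,\dots,2m-1\}$ let $f(x,y,l)=(-xq^l\bmod n)(-yq^l\bmod n)$. Then: (a) For all $0\le k\le(2m-1)/2$, $(x,y)\in Z_{des,k}$ and odd $l\in\{1,\dots,2m-1\}$ with $l\ne 2m-k-1$: $f(x,y,l)\ge q^{2m}-1-q^{m-1}$ if $m$ is even, and $f(x,y,l)\ge q^{2m}-1-q^{m}$ if $m$ is odd; these bounds are attained at $k=0$, $x=1$, $y=q^{2m}-1-q^{2m-l}$ with $l=m-1$ ($m$ even), respectively $l=m$ ($m$ odd). (b) For all $0\le k\le(2m-1)/2$, $(x,y)\in Z_{des,k}$ and $l=2m-k-1$ odd: if $m$ is odd then $f(x,y,l)\ge (q^m-1)^2$, with equality at $k=m-1$, $l=m$, $x=y=q^m-1$; if $m$ is even then $f(x,y,l)\ge q^{2m}-1$.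
   Context: Here $a\bmod n$ denotes the least nonnegative residue of $a$ modulo $n$. *)

(* Defs.v *)
From mathcomp Require Import all_boot.
Set Implicit Arguments. Unset Strict Implicit. Unset Printing Implicit Defensive.

Definition prime_power (q : nat) : Prop := exists p e, prime p /\ 0 < e /\ q = p ^ e.

Definition nN (q m : nat) : nat := q ^ (2 * m) - 1.

Definition negmod (n a : nat) : nat := (n - a %% n) %% n.

Definition in_Zdes (q m x y : nat) : bool :=
  [&& 1 <= x <= nN q m, 1 <= y <= nN q m & x * y < q ^ (2 * m) - 1 - q ^ (m - 1)].

Definition in_Zdesk (q m k x y : nat) : bool :=
  in_Zdes q m x y && (q ^ k - 1 < x <= q ^ k.+1 - 1).

Definition fxyl (q m x y l : nat) : nat :=
  negmod (nN q m) (x * q ^ l) * negmod (nN q m) (y * q ^ l).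

Definition odd_l (m l : nat) : bool := odd l && (1 <= l <= 2 * m - 1).

(* 0 <= k <= (2m-1)/2 (k integer) *)
Definition k_ok (m k : nat) : bool := 2 * k <= 2 * m - 1.

(* Main.v *)
Require Import Defs.
From mathcomp Require Import all_boot.
From mathcomp Require Import zify.
From mathcomp Require Import ssralg ring.

Lemma negmod_small n a : 0 < a -> a < n -> negmod n a = n - a.
Proof. move=> a0 an; rewrite /negmod (modn_small an) modn_small //; lia. Qed.

Lemma Ltrick n L Q y : 0 < y < n -> L * Q = n.+1 ->
  0 < negmod n (y * Q) /\ n %| L * negmod n (y * Q) + y.
Proof.
move=> /andP [y0 yn] hLQ.
have hd := divn_eq (y * Q) n.
set d := (y * Q) %/ n in hd. set r := (y * Q) %% n in hd.
have rn : r < n by rewrite /r ltn_mod; lia.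
have e1 : L * (y * Q) = y + y * n by rewrite mulnCA hLQ mulnS.
have r0 : 0 < r.
  rewrite lt0n; apply/negP => /eqP r0.
  have : n %| L * (y * Q) by rewrite dvdn_mull // /dvdn -/r r0.
  rewrite e1 dvdn_addl ?dvdn_mull //.
  move/(dvdn_leq y0); lia.
have -> : negmod n (y * Q) = n - r by rewrite /negmod -/r modn_small; lia.
split; first lia.
have e2 : (L * (n - r) + y) + y * n = n * (L + L * d).
  rewrite hd mulnDr in e1. rewrite mulnBr. 
  have : L * r <= L * n by rewrite leq_mul2l; lia.
  move: e1; rewrite !mulnDr. nia.
by rewrite -(dvdn_addl _ (dvdn_mull y (dvdnn n))) e2 dvdn_mulr.
Qed.

Lemma prodsub a b c n : a + b + c <= n -> c * n <= (n - a) * (n - b).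
Proof.
move=> h; have -> : n = a + b + c + (n - (a + b + c)) by lia.
set e := n - _. have -> : a + b + c + e - a = b + c + e by lia.
have -> : a + b + c + e - b = a + c + e by lia.
nia.
Qed.

Lemma powfacts q m : 1 < q -> 3 < m ->
  [/\ q ^ m = q * q ^ (m - 1), q ^ (2 * m) = q * q * (q ^ (m - 1) * q ^ (m - 1))
    & q * q * q <= q ^ (m - 1)].
Proof.
move=> q1 m3; split.
- by rewrite -expnS; congr (_ ^ _); lia.
- by rewrite -expnD -!mulnA -!expnS; congr (_ ^ _); lia.
- have -> : q * q * q = q ^ 3 by rewrite !expnS expn0 muln1 mulnA.
  rewrite leq_exp2l //; lia.
Qed.


Lemma wrap_arith q P L x y A C n : 1 < q -> q * q * q <= P -> n.+1 = q * q * (P * P) ->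
  L <= P -> 2 <= L -> L <= x -> x < q * P -> x * y < n ->
  n <= L * A + x -> n <= L * C + y -> n <= A * C.
Proof.
move=> q1 P3 hN LP L2 Lx xqP hxy LA LC.
have h1 : (n - x) * (n - y) <= (L * A) * (L * C) by apply: leq_mul; lia.
have h2 : L * y <= x * y by rewrite leq_mul2r Lx orbT.
have h3 : L * L <= P * P by apply: leq_mul.
have h4 : q * P <= P * P by rewrite leq_mul2r; apply/orP; right; apply: leq_trans P3; nia.
have h7 : 2 * y <= L * y by rewrite leq_mul2r L2 orbT.
have h8 : 4 * (P * P) <= q * q * (P * P) by rewrite leq_mul2r; apply/orP; right; exact: (leq_mul q1 q1).
have h5 : x + y + L * L <= n by lia.
have h6 := prodsub _ _ _ _ h5.
have : L * L * n <= L * L * (A * C).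
  have -> : L * L * (A * C) = (L * A) * (L * C) by rewrite mulnACA.
  lia.
rewrite leq_mul2l; case/orP => //; rewrite muln_eq0 orbb; lia.
Qed.
Lemma partA_core q m k l P n L Q x y qk qk1 T :
  1 < q -> q * q * q <= P -> n.+1 = q * q * (P * P) -> L * Q = n.+1 ->
  0 < x -> 0 < y -> x * y < n - P -> qk <= x -> x < qk1 -> 0 < Q ->
  (2 * m <= k + l -> [/\ L <= P, L <= qk, q <= L & qk1 <= q * P]) ->
  (k + l <= 2 * m - 2 -> qk1 * Q <= T) -> q * T = n.+1 -> L <= T ->
  (P < L -> l <= m) -> l != 2 * m - k - 1 -> l <= 2 * m - 1 ->
  n <= negmod n (x * Q) * negmod n (y * Q) \/
  (negmod n (x * Q) * negmod n (y * Q) = n - Q /\ l <= m).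
Proof.
move=> q1 P3 hN hLQ x1 y1 hxy xk hxk' Qpos hw hnw hT hLT hPL hl l2.
have hx0 : x <= x * y by rewrite leq_pmulr.
have hy0 : y <= x * y by rewrite leq_pmull.
have hx : 0 < x < n by rewrite x1; lia.
have hy : 0 < y < n by rewrite y1; lia.
have [A0 dA] := Ltrick n L Q x hx hLQ.
have [C0 dC] := Ltrick n L Q y hy hLQ.
have eA := negmod_small n (x*Q).
move: A0 dA C0 dC eA; move: (negmod n (x * Q)) (negmod n (y * Q)).
move=> A C A0 dA C0 dC eA.
have LA : n <= L * A + x by apply: dvdn_leq; rewrite // addn_gt0 x1 orbT.
have LC : n <= L * C + y by apply: dvdn_leq; rewrite // addn_gt0 y1 orbT.
clear dA dC.
case: (leqP (2 * m) (k + l)) => hkl.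
- have [LP Lk L2 hqk] := hw hkl.
  left; apply: (wrap_arith q P L x y A C n q1 P3 hN LP); lia.
- have hkl2 : k + l <= 2 * m - 2.
    move: hl; case: (ltngtP (k + l) (2 * m - 1)); lia.
  have xQ : 2 * (x * Q) <= n.
    have : x * Q < qk1 * Q by rewrite ltn_mul2r Qpos hxk'.
    have := hnw hkl2.
    have : 2 * T <= q * T by rewrite leq_mul2r q1 orbT.
    lia.
  have eA' : A = n - x * Q by rewrite eA; [lia|rewrite muln_gt0 x1 Qpos|lia].
  case: (leqP 2 C) => hC.
    left; have : 2 * A <= A * C by rewrite mulnC leq_mul2l hC orbT.
    lia.
  have C1 : C = 1 by lia.
  have L2 : 2 * L <= n.+1.
    have : 2 * T <= q * T by rewrite leq_mul2r q1 orbT.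
    lia.
  have x1' : x = 1.
    case: (leqP x 1) => hx1; first lia.
    have : 2 * y <= x * y by rewrite leq_mul2r hx1 orbT.
    lia.
  right; split; first by rewrite C1 eA' x1' mul1n muln1.
  apply: hPL; lia.
Qed.

Lemma partA q m k x y l : 1 < q -> 3 < m -> k_ok m k -> in_Zdesk q m k x y ->
  odd_l m l -> l != 2 * m - k - 1 ->
  (if ~~ odd m then q ^ (2 * m) - 1 - q ^ (m - 1) <= fxyl q m x y l
   else q ^ (2 * m) - 1 - q ^ m <= fxyl q m x y l).
Proof.
move=> q1 m3; rewrite /k_ok /odd_l /fxyl /nN.
move=> hk hZ /andP [lodd /andP [l1 l2]] hl; move: hZ.
have [eqm eqN P3] := powfacts _ _ q1 m3.
have hkm : k <= m - 1 by clear -hk; lia.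
have qk0 : 0 < q ^ k by rewrite expn_gt0; clear -q1; lia.
have hLQ : q ^ (2 * m - l) * q ^ l = q ^ (2 * m) by rewrite -expnD subnK; clear -l2; lia.
have hw : 2 * m <= k + l -> [/\ q ^ (2 * m - l) <= q ^ (m - 1),
    q ^ (2 * m - l) <= q ^ k, q <= q ^ (2 * m - l) & q ^ k.+1 <= q * q ^ (m - 1)].
  move=> hkl; rewrite -eqm; split; rewrite ?leq_exp2l //; try (clear -hkl hkm l2 m3; lia).
  - apply: (@leq_trans (q ^ 1)); first by rewrite expn1.
    rewrite leq_exp2l //; clear -l2 m3; lia.
have hT : q * q ^ (2 * m - 1) = q ^ (2 * m) by rewrite -expnS; congr (_ ^ _); clear -m3; lia.
have hnw : k + l <= 2 * m - 2 -> q ^ k.+1 * q ^ l <= q ^ (2 * m - 1).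
  by move=> hkl; rewrite -expnD leq_exp2l //; clear -hkl m3; lia.
have hLT : q ^ (2 * m - l) <= q ^ (2 * m - 1) by rewrite leq_exp2l //; clear -l1 m3; lia.
have hPL : q ^ (m - 1) < q ^ (2 * m - l) -> l <= m by rewrite ltn_exp2l //; clear; lia.
have hQP : l <= m - 1 -> q ^ l <= q ^ (m - 1) by move=> h; rewrite leq_exp2l.
have hQm : l <= m -> q ^ l <= q ^ m by move=> h; rewrite leq_exp2l.
have Qpos : 0 < q ^ l by rewrite expn_gt0; clear -q1; lia.
have [n hn] : exists n, q ^ (2 * m) = n.+1.
  by exists (q ^ (2 * m)).-1; rewrite prednK // expn_gt0; clear -q1; lia.
rewrite /in_Zdesk /in_Zdes /nN.
move=> /andP [/and3P [/andP [x1 xn] /andP [y1 yn] hxy] /andP [hkx hxk]].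
have xk : q ^ k <= x by clear -qk0 hkx; lia.
have hxk' : x < q ^ k.+1 by clear -hxk x1; lia.
rewrite hn in hT hLQ eqN hxy *.
rewrite subn1 /= in hxy *.
have := partA_core q m k l (q ^ (m - 1)) n (q ^ (2 * m - l)) (q ^ l) x y (q ^ k) (q ^ k.+1) (q ^ (2 * m - 1)) q1 P3 eqN hLQ x1 y1 hxy xk hxk' Qpos hw hnw hT hLT hPL hl l2.
move: (negmod n (x * q ^ l) * negmod n (y * q ^ l)) => f.
case=> [h|[h hlm]]; case: ifP => hm.
- clear -h; lia.
- clear -h; lia.
- have hlm' : l <= m - 1.
    have lnm : l != m by apply/eqP => e; move: hm; rewrite -e lodd.
    clear -lnm hlm; lia.
  have := hQP hlm'; clear -h; lia.
- have := hQm hlm; clear -h; lia.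
Qed.

Lemma b2_arith R x a y C : 2 <= R -> x + a = R -> 1 <= a -> 1 <= C -> C < R ->
  y + R * C + 1 = R * R -> x * y < R * R - 1 -> (R - 1) ^ 2 <= (a * R - 1) * C.
Proof.
move=> R2 hxa a1 C1 CR hy hxy.
rewrite -mulnn leqNgt; apply/negP => hlt.
have h1 : a * (R - 1) <= a * R - 1 by rewrite mulnBr muln1; lia.
have h2 : a * (R - 1) * C < (R - 1) * (R - 1).
  apply: leq_ltn_trans hlt; by rewrite leq_mul2r h1 orbT.
have h3 : a * C < R - 1.
  move: h2; rewrite mulnAC ltn_mul2r; case/andP => _ //.
have {h1 h2 hlt} : exists t, C + t = R by exists (R - C); lia.
case=> t ht.
have hy' : y + 1 = x * R + a * R - R * C by lia.
have hy2 : y + 1 = t * R by rewrite -ht mulnDl in hy; lia.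
have h5 : x * t >= R + 1.
  have h4 : a + C <= a * C + 1 by clear -a1 C1; nia.
  have e2 : x * t + R * (a + C) = R * R + a * C.
    have := congr1 (muln a) ht; have := congr1 (muln R) ht.
    rewrite -hxa !mulnDl !mulnDr. lia.
  have h7 : R * (a + C) <= R * (R - 1) by rewrite leq_mul2l; apply/orP; right; lia.
  have h8 : R * (R - 1) + R = R * R by rewrite mulnBr muln1 subnK //; apply: leq_pmulr; lia.
  have h9 : 1 <= a * C by rewrite muln_gt0 a1 C1.
  lia.
have h6 : x * y + x = x * t * R by rewrite -mulnA -hy2 addn1 mulnS addnC.
have : (R + 1) * R <= x * t * R by rewrite leq_mul2r h5 orbT.
rewrite mulnDl mul1n.
have : x <= R by lia.
lia.
Qed.

Lemma b1a_arith q n L Q x y C : 1 < q -> 1 <= L -> q * q * L <= Q -> L * Q = n.+1 ->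
  2 <= x -> x < L -> x * y < n -> n <= L * C + y -> n <= (n - x * Q) * C.
Proof.
move=> q1 L1 hQ hLQ x2 xL hxy LC.
set A := n - x * Q.
have e1 : x * Q + Q <= L * Q by rewrite addnC -mulSn leq_mul2r xL orbT.
have hA : Q - 1 <= A by rewrite /A; lia.
have h4 : 4 * L <= q * q * L by rewrite leq_mul2r; apply/orP; right; exact: (leq_mul q1 q1).
have hQL : 2 * L <= Q - 1 by lia.
have h2y : 2 * y <= x * y by rewrite leq_mul2r x2 orbT.
have hny : n <= 2 * (n - y) by lia.
have s1 : A * (n - y) <= A * (L * C) by rewrite leq_mul2l; apply/orP; right; lia.
have s2 : A * n <= A * (2 * (n - y)) by rewrite leq_mul2l hny orbT.
have s3 : (2 * L) * n <= A * n by rewrite leq_mul2r; apply/orP; right; lia.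
have : (2 * L) * n <= (2 * L) * (A * C).
  have -> : (2 * L) * (A * C) = 2 * (A * (L * C)) by rewrite -!mulnA; congr (_ * _); rewrite mulnCA.
  have : A * (2 * (n - y)) = 2 * (A * (n - y)) by rewrite mulnCA.
  lia.
rewrite leq_mul2l; case/orP => //; lia.
Qed.

Lemma b1b_arith q P n Q y C : 1 < q -> q * q * q <= P -> Q = P * P * q -> q * Q = n.+1 ->
  y < n - P -> n <= q * C + y -> n <= (n - Q) * C.
Proof.
move=> q1 P3 hQ hqQ hy LC.
set A := n - Q.
have h2 : 2 * Q <= q * Q by rewrite leq_mul2r q1 orbT.
have hA : Q - 1 <= A by rewrite /A; lia.
have hPq : q * q <= P by apply: leq_trans P3; rewrite leq_pmulr //; lia.
have hP1 : P + 1 <= Q.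
  have : 2 * P <= P * P by rewrite leq_mul2r; apply/orP; right; lia.
  have : P * P <= P * P * q by rewrite leq_pmulr //; lia.
  lia.
have s1 : A * (n - y) <= A * (q * C) by rewrite leq_mul2l; apply/orP; right; lia.
have s2 : (Q - 1) * (P + 1) <= A * (n - y) by apply: leq_mul; lia.
have s3 : Q * P <= (Q - 1) * (P + 1).
  rewrite mulnDr muln1 mulnBl mul1n.
  have : P <= Q * P by rewrite leq_pmull; lia.
  lia.
have s4 : q * n < Q * P.
  have e : Q * P = (P * P) * (P * q) by rewrite hQ -!mulnA (mulnC q P).
  have t1 : q * (q * q) <= P * q by rewrite mulnC leq_mul2r; apply/orP; right; lia.
  have : (P * P) * (q * (q * q)) <= (P * P) * (P * q) by rewrite leq_mul2l t1 orbT.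
  have : q * n.+1 = (P * P) * (q * (q * q)) by rewrite -hqQ hQ; ring.
  rewrite mulnS. lia.
have : q * n <= q * (A * C).
  have -> : q * (A * C) = A * (q * C) by rewrite mulnCA.
  lia.
rewrite leq_mul2l; case/orP => //; lia.
Qed.

Lemma partB q m k x y : 1 < q -> 3 < m -> k_ok m k -> in_Zdesk q m k x y ->
  odd_l m (2 * m - k - 1) ->
  (if odd m then (q ^ m - 1) ^ 2 <= fxyl q m x y (2 * m - k - 1)
   else q ^ (2 * m) - 1 <= fxyl q m x y (2 * m - k - 1)).
Proof.
move=> q1 m3; rewrite /k_ok /odd_l /fxyl /nN.
move=> hk hZ /andP [lodd /andP [l1 l2]]; move: hZ.
have [eqm eqN P3] := powfacts _ _ q1 m3.
have hkm : k <= m - 1 by clear -hk; lia.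
move: lodd l1 l2; set l := 2 * m - k - 1 => lodd l1 l2.
have qk0 : 0 < q ^ k by rewrite expn_gt0; clear -q1; lia.
have hLQ : q ^ k.+1 * q ^ l = q ^ (2 * m) by rewrite -expnD; congr (_ ^ _); rewrite /l; clear -hkm m3; lia.
have Q2 : 2 <= q ^ l.
  apply: (@leq_trans (q ^ 1)); first by rewrite expn1.
  by rewrite leq_exp2l.
have [n hn] : exists n, q ^ (2 * m) = n.+1.
  by exists (q ^ (2 * m)).-1; rewrite prednK // expn_gt0; clear -q1; lia.
have hR : (q ^ m - 1) ^ 2 <= n.
  have : q ^ (2 * m) = q ^ m * q ^ m by rewrite -expnD; congr (_ ^ _); lia.
  rewrite hn; move: (q ^ m) => R e.
  have : 1 <= R by clear -e; nia.
  rewrite -mulnn mulnBr mulnBl !muln1 mul1n; lia.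
rewrite /in_Zdesk /in_Zdes /nN.
move=> /andP [/and3P [/andP [x1 xn] /andP [y1 yn] hxy] /andP [hkx hxk]].
have xk : q ^ k <= x by clear -qk0 hkx; lia.
have hxk' : x < q ^ k.+1 by clear -hxk x1; lia.
rewrite hn in hLQ eqN hxy *.
rewrite subn1 /= in hxy *.
have hx0 : x <= x * y by rewrite leq_pmulr.
have hy0 : y <= x * y by rewrite leq_pmull.
have hy : 0 < y < n by rewrite y1; clear -hy0 hxy; lia.
have [C0 dC] := Ltrick n (q ^ k.+1) (q ^ l) y hy hLQ.
have exQ : x * q ^ l + q ^ l <= q ^ k.+1 * q ^ l.
  by rewrite addnC -mulSn leq_mul2r hxk' orbT.
have eA := negmod_small n (x * q ^ l).
rewrite eA; last first.
  - clear -exQ Q2 hLQ; lia.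
  - by rewrite muln_gt0 x1; clear -Q2; lia.
move: C0 dC; move: (negmod n (y * q ^ l)) => C C0 dC.
have LC : n <= q ^ k.+1 * C + y by apply: dvdn_leq; rewrite // addn_gt0 y1 orbT.
case: (leqP k (m - 2)) => hkm2.
- suff hf : n <= (n - x * q ^ l) * C by case: ifP => _; clear -hf hR; lia.
  case: (leqP x 1) => hx1.
  + have x1' : x = 1 by clear -x1 hx1; lia.
    have k0 : k = 0.
      case: (posnP k) => // kp.
      have : q ^ 1 <= q ^ k by rewrite leq_exp2l.
      rewrite expn1; clear -xk x1' q1; lia.
    have eQ : q ^ l = q ^ (m - 1) * q ^ (m - 1) * q.
      by rewrite -!expnD -expnSr; congr (_ ^ _); rewrite /l k0; clear -m3; lia.
    rewrite x1' mul1n.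
    rewrite k0 expn1 in LC hLQ.
    apply: (b1b_arith q (q ^ (m - 1)) n (q ^ l) y C q1 P3 eQ hLQ _ LC).
    by rewrite x1' mul1n in hxy.
  + have hQ : q * q * q ^ k.+1 <= q ^ l.
      rewrite -mulnA -!expnS leq_exp2l //; rewrite /l; clear -hkm2 m3; lia.
    apply: (b1a_arith q n (q ^ k.+1) (q ^ l) x y C q1 _ hQ hLQ hx1 hxk' _ LC); first by rewrite expn_gt0; clear -q1; lia.
    clear -hxy; lia.
- have ekm : k = m - 1 by clear -hkm hkm2; lia.
  have el : l = m by rewrite /l ekm; clear -m3; lia.
  have modd : odd m by rewrite -el.
  rewrite modd.
  have eR : (m - 1).+1 = m by clear -m3; lia.
  move: hLQ LC dC exQ hxk' Q2 hR hxy; rewrite ekm el eR.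
  move: (q ^ m) => R hLQ LC dC exQ hxk' Q2 hR hxy.
  case: (leqP R C) => hRC.
  - have hA : R - 1 <= n - x * R by clear -exQ hLQ; lia.
    rewrite -mulnn; apply: leq_trans (_ : (R - 1) * R <= _); first by rewrite leq_mul2l; apply/orP; right; clear -Q2; lia.
    by apply: leq_mul.
  - have hRC2 : R * C + R <= R * R by rewrite addnC -mulnS leq_mul2l hRC orbT.
    have e : R * C + y = n.
      case/dvdnP: dC => c hc.
      case: c hc => [|[|c]] hc; first by clear -hc y1; lia.
        by rewrite mul1n in hc.
      have : 2 * n <= c.+2 * n by rewrite leq_mul2r; apply/orP; right.
      clear -hc hRC2 hLQ hy Q2; lia.
    have eA' : n - x * R = (R - x) * R - 1 by rewrite mulnBl; clear -hLQ exQ; lia.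
    rewrite eA'.
    apply: (b2_arith R x (R - x) y C); try (clear -Q2 hxk' C0 hRC; lia).
      clear -e hLQ; lia.
    clear -hxy hLQ; lia.
Qed.

Lemma negmod_m1 P Z : 2 <= P -> 2 <= Z ->
  negmod (P * Z - 1) ((P * Z - 1 - Z) * P) = 1.
Proof.
move=> P2 Z2.
have hPZ : 2 * Z <= P * Z by rewrite leq_mul2r P2 orbT.
have hPZ' : 2 * P <= P * Z by rewrite mulnC leq_mul2l Z2 orbT.
have e : (P * Z - 1 - Z) * P = (P - 2) * (P * Z - 1) + (P * Z - 2).
  rewrite !mulnBl !mulnBr !muln1 (mulnC Z P).
  have h1 : 2 * (P * Z) <= P * (P * Z) by rewrite leq_mul2r P2 orbT.
  have h2 : P * Z <= P * Z * P by rewrite leq_pmulr //; lia.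
  have h3 : P * (P * Z) = P * Z * P by rewrite mulnC.
  have h4 : P - 2 <= (P - 2) * (P * Z) by rewrite leq_pmulr //; lia.
  rewrite mulnBl in h4.
  lia.
have hs : P * Z - 2 < P * Z - 1 by lia.
rewrite /negmod e modnMDl (modn_small hs).
have -> : P * Z - 1 - (P * Z - 2) = 1 by lia.
by rewrite modn_small //; lia.
Qed.

Lemma exA_even q m : 1 < q -> 3 < m -> ~~ odd m ->
      let l := m - 1 in let y := q ^ (2 * m) - 1 - q ^ (2 * m - l) in
      [/\ k_ok m 0, in_Zdesk q m 0 1 y, odd_l m l, l != 2 * m - 0 - 1 &
          fxyl q m 1 y l = q ^ (2 * m) - 1 - q ^ (m - 1)].
Proof.
move=> q1 m3 hm l y.
have [eqm eqN P3] := powfacts _ _ q1 m3.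
have eZ : q ^ (2 * m - l) = q * q * q ^ (m - 1).
  by rewrite -mulnA -!expnS /l; congr (_ ^ _); clear -m3; lia.
have eN : q ^ (2 * m) = q ^ (m - 1) * q ^ (2 * m - l).
  by rewrite -expnD /l; congr (_ ^ _); clear -m3; lia.
have hq4 : 4 <= q * q by exact: (leq_mul q1 q1).
rewrite /y /k_ok /in_Zdesk /in_Zdes /odd_l /fxyl /nN eN {eN}.
move: eZ P3; move: (q ^ (m - 1)) (q ^ (2 * m - l)) => P Z eZ P3.
have hP8 : 2 <= P by clear -P3 q1; nia.
have hZ : 4 * P <= Z by rewrite eZ leq_mul2r hq4 orbT.
have hPZ : 4 * Z <= P * Z by rewrite leq_mul2r; apply/orP; right; clear -P3 q1; nia.
split.
- by rewrite muln0.
- rewrite !expn0 expn1 mul1n /=; apply/andP; split; last by clear -q1; lia.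
  apply/and3P; split; clear -hZ hPZ hP8; lia.
- have e : m = (m - 1).+1 by clear -m3; lia.
  move: hm; rewrite {1}e /= negbK => ->; rewrite /l; clear -m3; lia.
- rewrite /l; clear -m3; lia.
- rewrite mul1n negmod_m1 ?muln1; try (clear -hZ hP8; lia).
  rewrite negmod_small //; clear -hZ hP8 hPZ; lia.
Qed.

Lemma exA_odd q m : 1 < q -> 3 < m -> odd m ->
      let l := m in let y := q ^ (2 * m) - 1 - q ^ (2 * m - l) in
      [/\ k_ok m 0, in_Zdesk q m 0 1 y, odd_l m l, l != 2 * m - 0 - 1 &
          fxyl q m 1 y l = q ^ (2 * m) - 1 - q ^ m].
Proof.
move=> q1 m3 hm; cbv zeta.
have [eqm eqN P3] := powfacts _ _ q1 m3.
have eZ : q ^ (2 * m - m) = q ^ m by congr (_ ^ _); clear -m3; lia.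
have eN : q ^ (2 * m) = q ^ m * q ^ m by rewrite -expnD; congr (_ ^ _); clear -m3; lia.
rewrite /k_ok /in_Zdesk /in_Zdes /odd_l /fxyl /nN eN eZ {eN eZ}.
move: eqm P3; move: (q ^ (m - 1)) (q ^ m) => P R eR P3.
have hP8 : 2 <= P by clear -P3 q1; nia.
have hR : 2 * P <= R by rewrite eR leq_mul2r q1 orbT.
have hRR : 4 * R <= R * R by rewrite leq_mul2r; apply/orP; right; clear -hR hP8; lia.
split.
- by rewrite muln0.
- rewrite !expn0 expn1 mul1n /=; apply/andP; split; last by clear -q1; lia.
  apply/and3P; split; clear -hR hRR hP8; lia.
- by rewrite hm; clear -m3; lia.
- clear -m3; lia.
- rewrite mul1n negmod_m1 ?muln1; try (clear -hR hP8; lia).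
  rewrite negmod_small //; clear -hR hP8 hRR; lia.
Qed.

Lemma exB q m : 1 < q -> 3 < m -> odd m ->
      [/\ k_ok m (m - 1), in_Zdesk q m (m - 1) (q ^ m - 1) (q ^ m - 1),
          m = 2 * m - (m - 1) - 1, odd_l m m &
          fxyl q m (q ^ m - 1) (q ^ m - 1) m = (q ^ m - 1) ^ 2].
Proof.
move=> q1 m3 hm.
have [eqm eqN P3] := powfacts _ _ q1 m3.
have eN : q ^ (2 * m) = q ^ m * q ^ m by rewrite -expnD; congr (_ ^ _); clear -m3; lia.
have eS : (m - 1).+1 = m by clear -m3; lia.
rewrite /k_ok /in_Zdesk /in_Zdes /odd_l /fxyl /nN eN eS {eN}.
move: eqm P3; move: (q ^ (m - 1)) (q ^ m) => P R eR P3.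
have hP8 : 2 <= P by clear -P3 q1; nia.
have hR : 2 * P <= R by rewrite eR leq_mul2r q1 orbT.
have hRR : 4 * R <= R * R by rewrite leq_mul2r; apply/orP; right; clear -hR hP8; lia.
have e1 : (R - 1) * R = R * R - R by rewrite mulnBl mul1n.
have e2 : (R - 1) * (R - 1) = R * R - R - R + 1.
  rewrite mulnBl mul1n mulnBr muln1. clear -hRR hP8 hR; lia.
split.
- clear -m3; lia.
- apply/andP; split; last by clear -hR hP8; lia.
  apply/and3P; split; try (clear -hR hRR hP8; lia).
- clear -m3; lia.
- by rewrite hm; clear -m3; lia.
- rewrite negmod_small; last 2 first.
  + rewrite e1; clear -hRR hP8 hR; lia.
  + rewrite e1; clear -hRR hP8 hR; lia.
  by rewrite e1 -mulnn e2; clear -hRR hP8 hR; lia.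
Qed.

Theorem lemma9 (q m : nat) (hq : prime_power q) (hm : 3 < m) :
  (* (a) *)
  ((forall k x y l, k_ok m k -> in_Zdesk q m k x y -> odd_l m l ->
      l != 2 * m - k - 1 ->
      (if ~~ odd m then q ^ (2 * m) - 1 - q ^ (m - 1) <= fxyl q m x y l
       else q ^ (2 * m) - 1 - q ^ m <= fxyl q m x y l)) /\
   (~~ odd m ->
      let l := m - 1 in let y := q ^ (2 * m) - 1 - q ^ (2 * m - l) in
      [/\ k_ok m 0, in_Zdesk q m 0 1 y, odd_l m l, l != 2 * m - 0 - 1 &
          fxyl q m 1 y l = q ^ (2 * m) - 1 - q ^ (m - 1)]) /\
   (odd m ->
      let l := m in let y := q ^ (2 * m) - 1 - q ^ (2 * m - l) in
      [/\ k_ok m 0, in_Zdesk q m 0 1 y, odd_l m l, l != 2 * m - 0 - 1 &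
          fxyl q m 1 y l = q ^ (2 * m) - 1 - q ^ m])) /\
  (* (b) *)
  ((forall k x y, k_ok m k -> in_Zdesk q m k x y -> odd_l m (2 * m - k - 1) ->
      (if odd m then (q ^ m - 1) ^ 2 <= fxyl q m x y (2 * m - k - 1)
       else q ^ (2 * m) - 1 <= fxyl q m x y (2 * m - k - 1))) /\
   (odd m ->
      [/\ k_ok m (m - 1), in_Zdesk q m (m - 1) (q ^ m - 1) (q ^ m - 1),
          m = 2 * m - (m - 1) - 1, odd_l m m &
          fxyl q m (q ^ m - 1) (q ^ m - 1) m = (q ^ m - 1) ^ 2])).

Proof.
have q1 : 1 < q.
  case: hq => p [e [pp [e0 ->]]].
  apply: leq_trans (prime_gt1 pp) _.
  by rewrite -{1}(expn1 p) leq_pexp2l // prime_gt0.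
split; [split; [|split]|split].
- move=> k x y l; exact: partA.
- exact: exA_even.
- exact: exA_odd.
- move=> k x y; exact: partB.
- exact: exB.
Qed.
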